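(* Assume the Diagonal Conjecture (DC) holds: for every $r \ge 2$, all integers $3 \le s \le t$ and all integers $k_3,\dots,k_r \ge 2$, we have $R(s,t,k_3,\dots,k_r) \ge R(s-1,t+1,k_3,\dots,k_r)$. If $\lim_{r\to\infty} R_r(3)^{1/r}$ is finite, then $\lim_{r\to\infty} R_r(k)^{1/r}$ is finite for every integer $k \ge 3$.
   Context: $R(k_1,\dots,k_r)$ denotes the multicolor Ramsey number: the least $n$ such that every coloring of the edges of $K_n$ with $r$ colors contains, for some $i$, a complete subgraph $K_{k_i}$ all of whose edges have color $i$; it is symmetric in its arguments. $R_r(k)=R(k,\dots,k)$ with $r$ arguments equal to $k$. It is known that for each $k$ the limit $\lim_{r\to\infty} R_r(k)^{1/r}$ exists (possibly infinite). *)

(* Defs.v *)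
From Stdlib Require Import Reals ClassicalEpsilon.
From mathcomp Require Import all_boot.

Set Implicit Arguments. Unset Strict Implicit. Unset Printing Implicit Defensive.

(* An r-colouring of the edges of K_n (r = size ks) is given by a function
   c : 'I_n -> 'I_n -> 'I_r, where the colour of the edge {x,y} with x < y is
   c x y (values with x >= y are irrelevant).
   [arrows n ks] : every such colouring contains, for some colour i, a set S
   of nth 0 ks i vertices all of whose edges have colour i. *)
Definition mono_clique (n r : nat) (c : 'I_n -> 'I_n -> 'I_r) (i : 'I_r)
  (S : {set 'I_n}) : Prop :=
  forall x y : 'I_n, x \in S -> y \in S -> (x < y)%N -> c x y = i.

Definition arrows (n : nat) (ks : seq nat) : Prop :=
  forall c : 'I_n -> 'I_n -> 'I_(size ks),
    exists (i : 'I_(size ks)) (S : {set 'I_n}),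
      #|S| = nth 0%N ks i /\ mono_clique c i S.

Definition arrowsb (n : nat) (ks : seq nat) : bool :=
  if excluded_middle_informative (arrows n ks) then true else false.

(* Multicolour Ramsey number R(k_1,...,k_r) with r = size ks: the least n
   with [arrows n ks] (defaults to 0 if no such n exists, which never happens
   for r >= 1 by Ramsey's theorem). *)
Definition ramsey (ks : seq nat) : nat :=
  match excluded_middle_informative (exists n, arrowsb n ks) with
  | left h => ex_minn h
  | right _ => 0%N
  end.

Definition ramsey_diag (r k : nat) : nat := ramsey (nseq r k).

Definition ramsey_root (k r : nat) : R :=
  Rpower (INR (ramsey_diag r k)) (/ INR r).

Definition diagonal_conjecture : Prop :=
  forall (s t : nat) (ks : seq nat),
    (3 <= s)%N -> (s <= t)%N -> all (fun k => 2 <= k)%N ks ->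
    (ramsey [:: s.-1, t.+1 & ks] <= ramsey [:: s, t & ks])%N.

(* Main.v *)
Require Import Defs.
From Stdlib Require Import Reals Classical ClassicalEpsilon.
From mathcomp Require Import all_boot zify.
Set Implicit Arguments. Unset Strict Implicit. Unset Printing Implicit Defensive.

Lemma arrowsbP n ks : reflect (arrows n ks) (arrowsb n ks).
Proof.
rewrite /arrowsb; case: excluded_middle_informative => h; by constructor.
Qed.

Lemma ramsey_min ks n : arrows n ks -> (ramsey ks <= n)%N /\ arrows (ramsey ks) ks.
Proof.
move=> h; rewrite /ramsey; case: excluded_middle_informative => [e|ne]; last first.
  by exfalso; apply: ne; exists n; apply/arrowsbP.
case: ex_minnP => m /arrowsbP hm hmin; split=> //; apply: hmin; exact/arrowsbP.
Qed.

Lemma ramsey0 ks : ~ (exists n, arrows n ks) -> ramsey ks = 0.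
Proof.
move=> h; rewrite /ramsey; case: excluded_middle_informative => // -[n hn].
by exfalso; apply: h; exists n; apply/arrowsbP.
Qed.

Lemma ramsey_eq ks ks' : (forall n, arrows n ks <-> arrows n ks') -> ramsey ks = ramsey ks'.
Proof.
move=> E.
case: (classic (exists n, arrows n ks)) => [[n hn]|hn].
  have hn' := (proj1 (E n) hn).
  have [a1 b1] := ramsey_min hn; have [a2 b2] := ramsey_min hn'.
  have [c1 _] := ramsey_min (proj2 (E _) b2).
  have [c2 _] := ramsey_min (proj1 (E _) b1).
  by apply/eqP; rewrite eqn_leq c1 c2.
rewrite !ramsey0 //; move=> [n hn']; apply: hn; exists n; exact/E.
Qed.

Lemma arrows_mono m n ks : (m <= n)%N -> arrows m ks -> arrows n ks.
Proof.
move=> le h c.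
pose w (x : 'I_m) : 'I_n := widen_ord le x.
have [i [S [cS mS]]] := h (fun x y => c (w x) (w y)).
exists i, (w @: S); split.
  rewrite card_imset //; move=> x y /(congr1 val) /= ?; exact: val_inj.
move=> x y /imsetP [x' x'S ->] /imsetP [y' y'S ->] lt; exact: mS.
Qed.

Lemma arrows_recol n L L' (f : 'I_(size L') -> 'I_(size L)) (g : 'I_(size L) -> 'I_(size L')) :
  cancel f g -> (forall i, nth 0 L' (g i) = nth 0 L i) -> arrows n L -> arrows n L'.
Proof.
move=> fK hn h c.
have [i [S [cS mS]]] := h (fun x y => f (c x y)).
exists (g i), S; split; first by rewrite hn.
move=> x y xS yS lt; by rewrite -(mS x y xS yS lt) fK.
Qed.

Lemma arrows_perm n L L' : perm_eq L L' -> arrows n L -> arrows n L'.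
Proof.
move=> pe.
have /(perm_iotaP 0) [Is pI eL] := pe.
have sz : size L = size L' by apply: perm_size.
have szI : size Is = size L' by rewrite (perm_size pI) size_iota.
have memI j : (j < size L')%N -> j \in Is by move=> lj; rewrite (perm_mem pI) mem_iota.
have hI i : (i < size L)%N -> (nth 0 Is i < size L')%N.
  move=> li; have: nth 0 Is i \in Is by rewrite mem_nth // szI -sz.
  by rewrite (perm_mem pI) mem_iota.
pose g (i : 'I_(size L)) : 'I_(size L') := Ordinal (hI i (ltn_ord i)).
have hJ (j : 'I_(size L')) : (index (nat_of_ord j) Is < size L)%N.
  have e : size L = size Is by rewrite szI.
  by rewrite e index_mem memI.
pose f (j : 'I_(size L')) : 'I_(size L) := Ordinal (hJ j).
apply: (@arrows_recol n L L' f g).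
  move=> j; apply: val_inj => /=; rewrite nth_index //; exact: memI.
move=> [i li] /=; rewrite [in RHS]eL (nth_map 0) //; by rewrite szI -sz.
Qed.

Lemma ramsey_perm L L' : perm_eq L L' -> ramsey L = ramsey L'.
Proof.
move=> pe; apply: ramsey_eq => n; split; apply: arrows_perm => //; by rewrite perm_sym.
Qed.

Lemma arrows2 n L : (0 < size L)%N -> (arrows n (2 :: L) <-> arrows n L).
Proof.
move=> szL; split.
- move=> h c.
  have [i [S [cS mS]]] := h (fun x y => lift ord0 (c x y) : 'I_(size (2::L))).
  case: (unliftP ord0 i) cS mS => [j ->|-> ] cS mS.
    exists j, S; split => //; move=> x y xS yS lt; apply: (@lift_inj _ ord0); exact: mS.
  exfalso; move: cS => /= /eqP /cards2P [x [y [xy eS]]].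
  have xS : x \in S by rewrite eS !inE eqxx.
  have yS : y \in S by rewrite eS !inE eqxx orbT.
  case: (ltngtP x y) => [lt|lt|e]; last by move: xy; rewrite (val_inj e) eqxx.
    by have /= := mS x y xS yS lt; move=> /(congr1 val); rewrite /= /bump.
  by have /= := mS y x yS xS lt; move=> /(congr1 val); rewrite /= /bump.
- move=> h c.
  case: (classic (exists x y : 'I_n, (x < y)%N /\ c x y = ord0)) => [[x [y [lt e]]]|ne].
    exists ord0, [set x; y]; split.
      rewrite cards2; case: eqP => [exy|]; last by [].
      by move: lt; rewrite exy ltnn.
    move=> a b; rewrite !inE => /orP[]/eqP-> /orP[]/eqP-> //; try by rewrite ltnn.
    move=> lt'; exfalso; move: (ltn_trans lt lt'); by rewrite ltnn.
  pose d : 'I_(size L) := Ordinal szL.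
  have [i [S [cS mS]]] := h (fun x y => odflt d (unlift ord0 (c x y))).
  exists (lift ord0 i), S; split => //.
  move=> x y xS yS lt; have := mS x y xS yS lt.
  case: (unliftP ord0 (c x y)) => [j -> /= -> //|e].
  by exfalso; apply: ne; exists x, y.
Qed.

Lemma ramsey2 L : (0 < size L)%N -> ramsey (2 :: L) = ramsey L.
Proof. move=> s; apply: ramsey_eq => n; exact: arrows2. Qed.

Lemma chain k M : diagonal_conjecture -> (3 <= k)%N -> all (fun k => 2 <= k)%N M ->
  (ramsey (k :: M) <= ramsey (nseq (k - 2) 3 ++ M))%N.
Proof.
move=> DC hk; have [j ->] : exists j, k = j.+3 by exists (k - 3); rewrite -addn3 subnK.
elim: j M => [|j IH] M hM; first by [].
rewrite -(ramsey2 (L := j.+4 :: M)) //.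
apply: (leq_trans (DC 3 j.+3 M _ _ hM)) => //.
rewrite (@ramsey_perm [:: 3, j.+3 & M] [:: j.+3, 3 & M]); last by apply/permPl; exact: (perm_catCA [:: 3] [:: j.+3] M).
apply: (leq_trans (IH (3 :: M) _)); first by rewrite /= hM.
rewrite (_ : j.+4 - 2 = (j.+3 - 2) + 1); last by rewrite !subSS subn0 addn1.
by rewrite nseqD -catA.
Qed.

Lemma diag_chain r k M : diagonal_conjecture -> (3 <= k)%N -> all (fun k => 2 <= k)%N M ->
  (ramsey (nseq r k ++ M) <= ramsey (nseq (r * (k - 2)) 3 ++ M))%N.
Proof.
move=> DC hk; elim: r M => [|r IH] M hM; first by [].
have hA : all (fun k => 2 <= k)%N (nseq r k ++ M).
  by rewrite all_cat hM all_nseq (leq_trans _ hk) ?orbT.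
rewrite /= (leq_trans (chain DC hk hA)) //.
rewrite catA (@ramsey_perm _ ((nseq r k ++ nseq (k - 2) 3) ++ M)); last by rewrite perm_cat2r perm_catC.
rewrite -catA (leq_trans (IH _ _)) //; first by rewrite all_cat hM all_nseq orbT.
by rewrite catA -nseqD mulSn addnC.
Qed.

Lemma diag_bound r k : diagonal_conjecture -> (3 <= k)%N ->
  (ramsey_diag r k <= ramsey_diag (r * (k - 2)) 3)%N.
Proof.
move=> DC hk; have := @diag_chain r k [::] DC hk isT; by rewrite !cats0.
Qed.

Lemma ramsey_core m (Hm : (0 < m)%N) n (c : 'I_n -> 'I_n -> 'I_m) :
  forall s (a : 'I_m -> nat) (V : {set 'I_n}), \sum_i a i = s -> (m.+1 ^ s <= #|V|)%N ->
  exists i (S : {set 'I_n}), S \subset V /\ #|S| = a i /\ mono_clique c i S.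
Proof.
elim=> [|s IH] a V sa hV.
  exists (Ordinal Hm), set0; split; first exact: sub0set.
  split; last by move=> x y; rewrite inE.
  rewrite cards0; apply/esym/eqP; rewrite -leqn0.
  apply: (@leq_trans (\sum_i a i)); last by rewrite sa.
  by rewrite (bigD1 (Ordinal Hm)) //= leq_addr.
case: (classic (exists i, a i = 0)) => [[i ai]|nz].
  exists i, set0; split; first exact: sub0set.
  split; last by move=> x y; rewrite inE.
  by rewrite cards0 ai.
have apos i : (0 < a i)%N by rewrite lt0n; apply/eqP => e; apply: nz; exists i.
have : (0 < #|V|)%N by apply: leq_trans hV; rewrite expn_gt0.
case/card_gt0P => x0 x0V.
case: (arg_minnP (fun x : 'I_n => nat_of_ord x) x0V) => v vV0 vmin.
have vV : v \in V := vV0.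
pose A := V :\ v.
have Aprop x : x \in A -> (v < x)%N /\ x \in V.
  rewrite !inE => /andP [xv xV]; split => //.
  by rewrite ltn_neqAle vmin // andbT; apply/eqP => e; move: xv; rewrite (val_inj e) eqxx.
pose W j := [set x in A | c v x == j].
have cardA : #|A| = \sum_j #|W j|.
  rewrite -sum1_card (partition_big (fun x => c v x) xpredT) //.
  apply: eq_bigr => j _; rewrite -sum1_card; apply: congr_big => // x; by rewrite /W inE.
have [j hj] : exists j, (m.+1 ^ s <= #|W j|)%N.
  apply: NNPP => ne.
  have lt j : (#|W j| <= m.+1 ^ s - 1)%N.
    rewrite leq_subRL ?expn_gt0 // add1n; rewrite ltnNge; apply/negP => h; apply: ne; by exists j.
  have : (#|A| <= m * (m.+1 ^ s - 1))%N.
    rewrite cardA; apply: leq_trans; first by apply: leq_sum => j' _; exact: lt j'.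
    by rewrite sum_nat_const card_ord mulnC.
  have eV : #|V| = #|A|.+1 by rewrite (cardsD1 v V) vV.
  move: hV; rewrite expnS eV => hV.
  have p : (0 < m.+1 ^ s)%N by rewrite expn_gt0.
  rewrite mulnBr muln1 => h2.
  move: hV h2 p Hm; set q := m.+1 ^ s; rewrite mulSn; nia.
pose a' i := if i == j then (a i).-1 else a i.
have sa' : \sum_i a' i = s.
  have e1 : \sum_i a i = a j + \sum_(i | i != j) a i by apply: bigD1.
  have e2 : \sum_i a' i = a' j + \sum_(i | i != j) a' i by apply: bigD1.
  have e3 : \sum_(i | i != j) a' i = \sum_(i | i != j) a i.
    by apply: eq_bigr => i /negbTE h; rewrite /a' h.
  have e4 : a' j = (a j).-1 by rewrite /a' eqxx.
  have := apos j; rewrite e2 e3 e4; move: sa; rewrite e1; lia.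
have [i [S [SW [cS mS]]]] := IH a' (W j) sa' hj.
have Sprop x : x \in S -> [/\ (v < x)%N, x \in V & c v x = j].
  move=> /(subsetP SW); rewrite inE => /andP [/Aprop [h1 h2] /eqP h3]; done.
case: (eqVneq i j) => [eij|nij].
  exists j, (v |: S); split.
    apply/subsetP => x; rewrite !inE => /orP [/eqP -> //|/Sprop []//].
  split.
    rewrite cardsU1 cS /a' eij eqxx.
    have -> : v \notin S by apply/negP => /Sprop [] ; rewrite ltnn.
    by have := apos j; case: (a j).
  move=> x y; rewrite !inE => /orP [/eqP ->|xS] /orP [/eqP ->|yS]; first by rewrite ltnn.
  - by move=> _; case: (Sprop y yS).
  - by case: (Sprop x xS) => h _ _ /(ltn_trans h); rewrite ltnn.
  - by move=> lt; rewrite -eij; apply: mS.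
exists i, S; split.
  apply/subsetP => x /Sprop []//.
by split => //; rewrite cS /a' (negbTE nij).
Qed.

Lemma arrows_exists L : (0 < size L)%N -> arrows ((size L).+1 ^ sumn L) L.
Proof.
move=> hL c.
have e1 : \sum_(i < size L) nth 0 L i = sumn L.
  by rewrite sumnE (big_nth 0) big_mkord.
have e2 : ((size L).+1 ^ sumn L <= #|[set: 'I_((size L).+1 ^ sumn L)]|)%N.
  by rewrite cardsT card_ord.
have [i [S [_ [cS mS]]]] := @ramsey_core (size L) hL _ c (sumn L) (fun i => nth 0 L i) setT e1 e2.
by exists i, S.
Qed.

Lemma noarrowsP n L : ~ arrows n L ->
  exists c : 'I_n -> 'I_n -> 'I_(size L), forall i S, mono_clique c i S -> #|S| <> nth 0 L i.
Proof.
move=> h; apply: NNPP => ne; apply: h => c.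
apply: NNPP => ne2; apply: ne; exists c => i S mS eS; apply: ne2; by exists i, S.
Qed.

Lemma product n1 n2 L1 L2 : (0 < n2)%N -> ~ arrows n1 L1 -> ~ arrows n2 L2 ->
  ~ arrows (n1 * n2) (L1 ++ L2).
Proof.
move=> n2p /noarrowsP [c1 h1] /noarrowsP [c2 h2] h.
have hu (x : 'I_(n1 * n2)) : (x %/ n2 < n1)%N by rewrite ltn_divLR // ltn_ord.
have hv (x : 'I_(n1 * n2)) : (x %% n2 < n2)%N by rewrite ltn_pmod.
pose u x : 'I_n1 := Ordinal (hu x).
pose v x : 'I_n2 := Ordinal (hv x).
have s1 (j : 'I_(size L1)) : (j < size (L1 ++ L2))%N by rewrite size_cat ltn_addr.
have s2 (j : 'I_(size L2)) : (size L1 + j < size (L1 ++ L2))%N by rewrite size_cat ltn_add2l.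
pose col1 j : 'I_(size (L1 ++ L2)) := Ordinal (s1 j).
pose col2 j : 'I_(size (L1 ++ L2)) := Ordinal (s2 j).
pose c x y := if u x != u y then col1 (c1 (u x) (u y)) else col2 (c2 (v x) (v y)).
have [i [S [cS mS]]] := h c.
have dm (x : 'I_(n1 * n2)) : nat_of_ord x = (u x) * n2 + v x by rewrite /= -divn_eq.
have uinc (x y : 'I_(n1 * n2)) : (x < y)%N -> (u x <= u y)%N by move=> lt; rewrite leq_div2r // ltnW.
case: (ltnP i (size L1)) => hi.
  pose i1 : 'I_(size L1) := Ordinal hi.
  have key x y : x \in S -> y \in S -> (x < y)%N -> (u x < u y)%N /\ c1 (u x) (u y) = i1.
    move=> xS yS lt; have := mS x y xS yS lt; rewrite /c.
    case: ifP => [ne|].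
      move=> /(congr1 val) /= e; split; last exact: val_inj.
      by rewrite ltn_neqAle uinc // andbT; exact: ne.
    by move=> _ /(congr1 val) /= e; move: (hi); rewrite -e ltnNge leq_addr.
  have uinj : {in S &, injective u}.
    move=> x y xS yS e; case: (ltngtP x y) => [lt|lt|]; last exact: val_inj.
      by have [] := key x y xS yS lt; rewrite e ltnn.
    by have [] := key y x yS xS lt; rewrite e ltnn.
  apply: (h1 i1 (u @: S)).
    move=> a b /imsetP [x xS ->] /imsetP [y yS ->] lt.
    case: (ltngtP x y) => [lt'|lt'|e].
    - by have [] := key x y xS yS lt'.
    - by have [] := key y x yS xS lt'; move=> l _; move: (ltn_trans l lt); rewrite ltnn.
    - by move: lt; rewrite (val_inj e) ltnn.
  by rewrite card_in_imset // cS nth_cat hi.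
have hi2 : (i - size L1 < size L2)%N by have := ltn_ord i; have := size_cat L1 L2; lia.
pose i2 : 'I_(size L2) := Ordinal hi2.
have key x y : x \in S -> y \in S -> (x < y)%N -> u x = u y /\ c2 (v x) (v y) = i2.
  move=> xS yS lt; have := mS x y xS yS lt; rewrite /c.
  case: ifP => [ne|/negbFE/eqP eu].
    move=> /(congr1 val) /= e; move: hi; rewrite -e leqNgt ltn_ord //.
  move=> /(congr1 val) /= e; split => //; apply: val_inj => /=; rewrite -e; lia.
have vlt x y : x \in S -> y \in S -> (x < y)%N -> (v x < v y)%N.
  move=> xS yS lt; have [eu _] := key x y xS yS lt.
  move: lt; rewrite (dm x) (dm y) eu; lia.
have vinj : {in S &, injective v}.
  move=> x y xS yS e; case: (ltngtP x y) => [lt|lt|]; last exact: val_inj.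
    by have := vlt x y xS yS lt; rewrite e ltnn.
  by have := vlt y x yS xS lt; rewrite e ltnn.
apply: (h2 i2 (v @: S)).
  move=> a b /imsetP [x xS ->] /imsetP [y yS ->] lt.
  case: (ltngtP x y) => [lt'|lt'|e].
  - by have [] := key x y xS yS lt'.
  - by have := vlt y x yS xS lt'; move=> l; move: (ltn_trans l lt); rewrite ltnn.
  - by move: lt; rewrite (val_inj e) ltnn.
rewrite card_in_imset // cS nth_cat ltnNge hi /=; done.
Qed.

Lemma R_facts k n : (3 <= k)%N -> (0 < n)%N ->
  [/\ (k <= ramsey_diag n k)%N, arrows (ramsey_diag n k) (nseq n k)
    & ~ arrows (ramsey_diag n k - 1) (nseq n k)].
Proof.
move=> hk hn.
have sz : (0 < size (nseq n k))%N by rewrite size_nseq.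
have [_ hR] := ramsey_min (arrows_exists sz).
have nk : ~ arrows (k - 1) (nseq n k).
  move=> h; have [i [S [cS _]]] := h (fun _ _ => Ordinal sz).
  have := max_card S; rewrite card_ord cS nth_nseq.
  have : (i < n)%N by have := ltn_ord i; have := size_nseq n k; lia.
  move=> -> ; lia.
have kR : (k <= ramsey_diag n k)%N.
  rewrite leqNgt; apply/negP => lt; apply: nk; apply: (arrows_mono _ hR); rewrite /ramsey_diag in lt; lia.
split => //.
move=> h; have [le _] := ramsey_min h; rewrite /ramsey_diag in kR le; lia.
Qed.

Lemma supermult k a b : (3 <= k)%N -> (0 < a)%N -> (0 < b)%N ->
  ((ramsey_diag a k - 1) * (ramsey_diag b k - 1) <= ramsey_diag (a + b) k - 1)%N.
Proof.
move=> hk ha hb.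
have [ka _ na] := R_facts hk ha.
have [kb _ nb] := R_facts hk hb.
have abp : (0 < a + b)%N by lia.
have [kab hab _] := R_facts hk abp.
have nbp : (0 < ramsey_diag b k - 1)%N by lia.
have := product nbp na nb; rewrite -nseqD => np.
rewrite leqNgt; apply/negP => lt; apply: np; apply: (arrows_mono _ hab).
by lia.
Qed.
From Stdlib Require Import Lra.
Local Open Scope R_scope.

Lemma ln_le' a b : 0 < a -> a <= b -> ln a <= ln b.
Proof. move=> ha hab; case: (Rle_lt_or_eq_dec _ _ hab) => [h|->]; last lra. left; exact: ln_increasing. Qed.

Lemma exp_le' a b : a <= b -> exp a <= exp b.
Proof. move=> hab; case: (Rle_lt_or_eq_dec _ _ hab) => [h|->]; last lra. left; exact: exp_increasing. Qed.

Lemma INR_pos n : (0 < n)%N -> 0 < INR n.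
Proof. move=> h; apply: lt_0_INR; apply/ltP; done. Qed.

Lemma iter_super (x : nat -> R) m q s : (forall n, (0 < n)%N -> 1 <= x n) ->
  (forall a b, (0 < a)%N -> (0 < b)%N -> x a * x b <= x (a + b)%N) ->
  (0 < m)%N -> (0 < s)%N -> x m ^ q * x s <= x (q * m + s)%N.
Proof.
move=> h1 hs mp sp; elim: q => [|q IH]; first by rewrite /= mul0n add0n; lra.
have e : (q.+1 * m + s = m + (q * m + s))%N by rewrite mulSn addnA.
rewrite e /=.
have hm := h1 m mp.
have hp : 0 <= x m ^ q * x s.
  apply: Rmult_le_pos; last (have := h1 s sp; lra).
  apply: pow_le; lra.
apply: Rle_trans (hs m (q * m + s)%N mp _); last by rewrite addn_gt0 sp orbT.
rewrite Rmult_assoc; apply: Rmult_le_compat_l; lra.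
Qed.

Lemma fekete (x : nat -> R) : (forall n, (0 < n)%N -> 1 <= x n) ->
  (forall a b, (0 < a)%N -> (0 < b)%N -> x a * x b <= x (a + b)%N) ->
  (exists C, forall n, (0 < n)%N -> ln (x n) / INR n <= C) ->
  exists L, Un_cv (fun n => ln (x n) / INR n) L.
Proof.
move=> h1 hs [C hC].
set y := fun n => ln (x n) / INR n.
have y0 n : (0 < n)%N -> 0 <= y n.
  move=> np; rewrite /y; apply: Rmult_le_pos; last by left; apply: Rinv_0_lt_compat; exact: INR_pos.
  rewrite -ln_1; apply: ln_le'; [lra | exact: h1].
pose E := fun v => exists n, (0 < n)%N /\ v = y n.
have bE : bound E by exists C => v [n [np ->]]; exact: hC.
have nE : exists v, E v by exists (y 1%N); exists 1%N.
have [L [Lub Lleast]] := @completeness E bE nE.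
exists L => eps ep.
have [m [mp ym]] : exists m, (0 < m)%N /\ L - eps / 2 < y m.
  apply: NNPP => ne.
  have : L <= L - eps / 2.
    apply: Lleast => v [n [np ->]].
    apply: Rnot_lt_le => lt; apply: ne; exists n; split => //.
  lra.
have [N0 hN0] := INR_unbounded (2 * INR m * y m / eps).
exists (N0 + m)%N => n hn.
have hn' : (N0 + m <= n)%N by apply/leP; lia.
have np : (0 < n)%N by lia.
have yn_le : y n <= L by apply: Lub; exists n.
set q := ((n - 1) %/ m)%N. set s := ((n - 1) %% m).+1.
have ens : n = (q * m + s)%N by rewrite /q /s addnS -divn_eq; lia.
have sp : (0 < s)%N by [].
have sm : (s <= m)%N by rewrite /s ltn_mod.
have hx := iter_super q h1 hs mp sp.
rewrite -ens in hx.
have xm1 := h1 m mp. have xs1 := h1 s sp.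
have lnx : INR q * ln (x m) <= ln (x n).
  have pq : 0 < x m ^ q by apply: pow_lt; lra.
  apply: Rle_trans (ln_le' _ hx); last by apply: Rmult_lt_0_compat; lra.
  rewrite ln_mult ?ln_pow //; try lra.
  have : 0 <= ln (x s) by rewrite -ln_1; apply: ln_le'; lra.
  lra.
have qm : INR n - INR m <= INR q * INR m.
  rewrite -mult_INR -minus_INR; last by apply/leP; lia.
  apply: le_INR; apply/leP; lia.
have Npos : 0 < INR n by exact: INR_pos.
have nN : INR N0 <= INR n by apply: le_INR; apply/leP; lia.
have lnxm : ln (x m) = y m * INR m.
  rewrite /y /Rdiv Rmult_assoc Rinv_l ?Rmult_1_r //; apply: not_0_INR; lia.
have ymp := y0 m mp.
have key : y m - INR m * y m / INR n <= y n.
  rewrite {2}/y; apply: (Rmult_le_reg_r (INR n)) => //.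
  have -> : ln (x n) / INR n * INR n = ln (x n) by field; lra.
  have -> : (y m - INR m * y m / INR n) * INR n = y m * INR n - INR m * y m by field; lra.
  apply: Rle_trans lnx.
  rewrite lnxm.
  have : y m * (INR n - INR m) <= y m * (INR q * INR m) by apply: Rmult_le_compat_l.
  nra.
have small : INR m * y m / INR n < eps / 2.
  apply: (Rmult_lt_reg_r (INR n)) => //.
  rewrite /Rdiv Rmult_assoc Rinv_l; last lra.
  have : 2 * INR m * y m / eps < INR n by lra.
  move=> h; apply: (Rmult_lt_reg_r (2 / eps)); first by apply: Rdiv_lt_0_compat; lra.
  have -> : eps * / 2 * INR n * (2 / eps) = INR n by field; lra.
  have -> : INR m * y m * 1 * (2 / eps) = 2 * INR m * y m / eps by field; lra.
  done.
rewrite /R_dist Rabs_left1; lra.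
Qed.

Theorem theorem2 :
  diagonal_conjecture ->
  (exists l : R, Un_cv (ramsey_root 3) l) ->
  forall k : nat, (3 <= k)%N -> exists l : R, Un_cv (ramsey_root k) l.
Proof.
move=> DC [l3 h3] k hk.
have [B [Bp hB]] := @maj_by_pos (ramsey_root 3) (exist _ l3 h3).
pose x n := INR (ramsey_diag n k - 1).
have x1 n : (0 < n)%N -> 1 <= x n.
  move=> np; have [kR _ _] := R_facts hk np.
  rewrite /x (_ : 1 = INR 1) //; apply: le_INR; apply/leP; lia.
have xs a b : (0 < a)%N -> (0 < b)%N -> x a * x b <= x (a + b)%N.
  move=> ha hb; rewrite /x -mult_INR; apply: le_INR; apply/leP; exact: supermult.
have bnd : exists C, forall n, (0 < n)%N -> ln (x n) / INR n <= C.
  exists (INR (k - 2) * ln B) => n np.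
  set m := (n * (k - 2))%N.
  have mp : (0 < m)%N by rewrite /m muln_gt0 np; lia.
  have le := diag_bound n DC hk.
  have [kR _ _] := R_facts hk np.
  have hm := hB m.
  have e3 : ramsey_root 3 m = exp (/ INR m * ln (INR (ramsey_diag m 3))) by [].
  rewrite e3 Rabs_right in hm; last by left; apply: exp_pos.
  have t1 : / INR m * ln (INR (ramsey_diag m 3)) <= ln B.
    rewrite -[X in X <= _]ln_exp; apply: ln_le' => //; exact: exp_pos.
  have mP := INR_pos mp.
  have t2 : ln (INR (ramsey_diag m 3)) <= INR m * ln B.
    apply: (Rmult_le_reg_l (/ INR m)); first exact: Rinv_0_lt_compat.
    rewrite -Rmult_assoc Rinv_l; lra.
  have t3 : ln (x n) <= ln (INR (ramsey_diag m 3)).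
    apply: ln_le'; first by have := x1 n np; lra.
    apply: le_INR; apply/leP; rewrite /m; lia.
  have nP := INR_pos np.
  have eM : INR m = INR n * INR (k - 2) by rewrite /m mult_INR.
  apply: (Rmult_le_reg_r (INR n)) => //.
  have -> : ln (x n) / INR n * INR n = ln (x n) by field; lra.
  nra.
have [L hL] := fekete x1 xs bnd.
exists (exp L).
have hz : Un_cv (fun n => / INR n * ln (INR (ramsey_diag n k))) L.
  move=> eps ep.
  have [N1 hN1] := hL (eps / 2) ltac:(lra).
  have [N2 hN2] := INR_unbounded (2 * ln 2 / eps).
  exists (N1 + N2 + 1)%N => n hn.
  have np : (0 < n)%N by apply/ltP; lia.
  have := hN1 n ltac:(lia); rewrite /R_dist => hy.
  have nP := INR_pos np.
  have xn1 := x1 n np.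
  have [kR _ _] := R_facts hk np.
  have eR : INR (ramsey_diag n k) = x n + 1.
    rewrite /x minus_INR /=; [lra | apply/leP; lia].
  rewrite /R_dist eR.
  have l1 : ln (x n) <= ln (x n + 1) by apply: ln_le'; lra.
  have l2 : ln (x n + 1) <= ln 2 + ln (x n).
    rewrite -ln_mult; [apply: ln_le'; lra | lra | lra].
  have nN2 : INR N2 <= INR n by apply: le_INR; lia.
  have l2p : 0 < ln 2 by rewrite -ln_1; apply: ln_increasing; lra.
  have sm : ln 2 / INR n < eps / 2.
    apply: (Rmult_lt_reg_r (INR n)) => //.
    have -> : ln 2 / INR n * INR n = ln 2 by field; lra.
    have h2 : 2 * ln 2 / eps < INR n by lra.
    have : 2 * ln 2 < eps * INR n.
      have := Rmult_lt_compat_r eps _ _ ep h2.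
      have -> : 2 * ln 2 / eps * eps = 2 * ln 2 by field; lra.
      lra.
    lra.
  have d1 : 0 <= / INR n * ln (x n + 1) - ln (x n) / INR n.
    have -> : / INR n * ln (x n + 1) - ln (x n) / INR n = (ln (x n + 1) - ln (x n)) / INR n by field; lra.
    apply: Rmult_le_pos; [lra | left; exact: Rinv_0_lt_compat].
  have d2 : / INR n * ln (x n + 1) - ln (x n) / INR n <= ln 2 / INR n.
    have -> : / INR n * ln (x n + 1) - ln (x n) / INR n = (ln (x n + 1) - ln (x n)) / INR n by field; lra.
    apply: Rmult_le_compat_r; [left; exact: Rinv_0_lt_compat | lra].
  move: hy; rewrite /Rdist => hy.
  have := Rabs_triang (/ INR n * ln (x n + 1) - ln (x n) / INR n) (ln (x n) / INR n - L).
  have -> : / INR n * ln (x n + 1) - ln (x n) / INR n + (ln (x n) / INR n - L) = / INR n * ln (x n + 1) - L by ring.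
  rewrite (Rabs_right (/ INR n * ln (x n + 1) - ln (x n) / INR n)); last lra. lra.
exact: (continuity_seq exp _ L (derivable_continuous _ derivable_exp L) hz).
Qed.
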